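(* Let $X_n,Y_n,X,Y$ ($n=1,2,\dots$) be mm-spaces and $F_n,F\in\mathcal F^2$ with $F_n\to F$ pointwise and such that for every $s,t\ge0$, $\lim_{n\to\infty}\big(F_n(s,t)-\inf_{s\le s',t\le t'}F_n(s',t')\big)=0$. Let $p_n\colon X_n\to X$ and $q_n\colon Y_n\to Y$ be Borel maps such that $p_n$ is 1-Lipschitz up to $\varepsilon_n$, $q_n$ is 1-Lipschitz up to $\delta_n$, $\pi((p_n)_*m_{X_n},m_X)\le\varepsilon_n$ and $\pi((q_n)_*m_{Y_n},m_Y)\le\delta_n$, where $\varepsilon_n,\delta_n\to0$. Then there is a sequence $\eta_n\to0$ such that $p_n\times q_n\colon X_n\times_{F_n}Y_n\to X\times_FY$, $(x,y)\mapsto(p_n(x),q_n(y))$, is 1-Lipschitz up to $\eta_n$.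
   Context: An mm-space is a triple $(X,d_X,m_X)$ with $(X,d_X)$ complete separable metric space and $m_X$ a Borel probability measure. $\mathcal F^2$: continuous $F\colon[0,+\infty)^2\to[0,+\infty)$ such that $d_F((x,y),(x',y')):=F(d_X(x,x'),d_Y(y,y'))$ is a metric on $X\times Y$ for all metric spaces; $X\times_FY:=(X\times Y,d_F,m_X\otimes m_Y)$. A map $f\colon X\to Y$ from an mm-space to a metric space is 1-Lipschitz up to (an additive error) $\varepsilon\ge0$ if there is a Borel $X_0\subset X$ with $m_X(X_0)\ge1-\varepsilon$ and $d_Y(f(x),f(x'))\le d_X(x,x')+\varepsilon$ for all $x,x'\in X_0$. $\pi$ is the Prokhorov distance: $\pi(\mu,\nu)$ is the infimum of $\varepsilon>0$ with $\mu(U_\varepsilon(A))\ge\nu(A)-\varepsilon$ for all Borel $A$, where $U_\varepsilon(A)=\{x:d(x,A)<\varepsilon\}$. *)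

(* Defs.v *)
From Stdlib Require Import Reals.
Open Scope R_scope.

Definition is_metric {T : Type} (d : T -> T -> R) : Prop :=
  (forall x y, 0 <= d x y) /\
  (forall x y, d x y = 0 <-> x = y) /\
  (forall x y, d x y = d y x) /\
  (forall x y z, d x z <= d x y + d y z).

Definition cauchy_seq {T : Type} (d : T -> T -> R) (u : nat -> T) : Prop :=
  forall eps, 0 < eps -> exists N, forall m n, (N <= m)%nat -> (N <= n)%nat ->
    d (u m) (u n) < eps.

Definition seq_converges {T : Type} (d : T -> T -> R) (u : nat -> T) (x : T) : Prop :=
  forall eps, 0 < eps -> exists N, forall n, (N <= n)%nat -> d (u n) x < eps.

Definition complete_metric {T : Type} (d : T -> T -> R) : Prop :=
  forall u, cauchy_seq d u -> exists x, seq_converges d u x.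

Definition separable_metric {T : Type} (d : T -> T -> R) : Prop :=
  exists D : nat -> T, forall x eps, 0 < eps -> exists n, d x (D n) < eps.

Definition open_set {T : Type} (d : T -> T -> R) (O : T -> Prop) : Prop :=
  forall x, O x -> exists r, 0 < r /\ forall y, d x y < r -> O y.

Definition sigma_algebra {T : Type} (S : (T -> Prop) -> Prop) : Prop :=
  S (fun _ => True) /\
  (forall A, S A -> S (fun x => ~ A x)) /\
  (forall A : nat -> T -> Prop, (forall i, S (A i)) -> S (fun x => exists i, A i x)).

Definition borel {T : Type} (d : T -> T -> R) (A : T -> Prop) : Prop :=
  forall S : (T -> Prop) -> Prop, sigma_algebra S ->
    (forall O, open_set d O -> S O) -> S A.

Definition borel_map {T U : Type} (dT : T -> T -> R) (dU : U -> U -> R)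
  (f : T -> U) : Prop :=
  forall A, borel dU A -> borel dT (fun x => A (f x)).

(** Borel probability measures (values on non-Borel sets are irrelevant). *)
Definition prob_measure {T : Type} (d : T -> T -> R) (m : (T -> Prop) -> R) : Prop :=
  (forall A, borel d A -> 0 <= m A) /\
  m (fun _ => True) = 1 /\
  (forall A : nat -> T -> Prop,
     (forall i, borel d (A i)) ->
     (forall i j x, i <> j -> A i x -> A j x -> False) ->
     infinite_sum (fun i => m (A i)) (m (fun x => exists i, A i x))).

Record mmspace : Type := MMSpace {
  mm_carrier :> Type;
  mm_dist : mm_carrier -> mm_carrier -> R;
  mm_meas : (mm_carrier -> Prop) -> R;
  mm_metric : is_metric mm_dist;
  mm_complete : complete_metric mm_dist;
  mm_separable : separable_metric mm_dist;
  mm_prob : prob_measure mm_dist mm_meas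
}.

Definition continuous_on_quadrant (F : R -> R -> R) : Prop :=
  forall s t, 0 <= s -> 0 <= t -> forall eps, 0 < eps ->
    exists delta, 0 < delta /\ forall s' t', 0 <= s' -> 0 <= t' ->
      Rabs (s' - s) < delta -> Rabs (t' - t) < delta ->
      Rabs (F s' t' - F s t) < eps.

Definition dF (F : R -> R -> R) {T U : Type} (dT : T -> T -> R) (dU : U -> U -> R)
  (a b : T * U) : R := F (dT (fst a) (fst b)) (dU (snd a) (snd b)).

Definition in_F2 (F : R -> R -> R) : Prop :=
  continuous_on_quadrant F /\
  (forall s t, 0 <= s -> 0 <= t -> 0 <= F s t) /\
  (forall (T U : Type) (dT : T -> T -> R) (dU : U -> U -> R),
     is_metric dT -> is_metric dU -> is_metric (dF F dT dU)).

Definition is_product_measure (F : R -> R -> R) (X Y : mmspace)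
  (mu : (X * Y -> Prop) -> R) : Prop :=
  prob_measure (dF F (mm_dist X) (mm_dist Y)) mu /\
  (forall A B, borel (mm_dist X) A -> borel (mm_dist Y) B ->
     mu (fun z => A (fst z) /\ B (snd z)) = mm_meas X A * mm_meas Y B).

Definition lip1_up_to {T U : Type} (dT : T -> T -> R) (m : (T -> Prop) -> R)
  (dU : U -> U -> R) (f : T -> U) (eps : R) : Prop :=
  exists X0 : T -> Prop, borel dT X0 /\ 1 - eps <= m X0 /\
    forall x x', X0 x -> X0 x' -> dU (f x) (f x') <= dT x x' + eps.

Definition pushforward {T U : Type} (f : T -> U) (m : (T -> Prop) -> R)
  : (U -> Prop) -> R := fun A => m (fun x => A (f x)).

Definition nbhd {T : Type} (d : T -> T -> R) (eps : R) (A : T -> Prop) : T -> Prop :=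
  fun x => exists a, A a /\ d x a < eps.

Definition prokhorov_cond {T : Type} (d : T -> T -> R) (mu nu : (T -> Prop) -> R)
  (eps : R) : Prop :=
  forall A, borel d A -> nu A - eps <= mu (nbhd d eps A).

(** pi(mu,nu) <= eps, where pi(mu,nu) is the infimum of the eps' > 0
    satisfying prokhorov_cond. *)
Definition prokhorov_le {T : Type} (d : T -> T -> R) (mu nu : (T -> Prop) -> R)
  (eps : R) : Prop :=
  forall e', eps < e' -> exists e, 0 < e /\ e < e' /\ prokhorov_cond d mu nu e.

Definition is_glb (E : R -> Prop) (l : R) : Prop :=
  (forall x, E x -> l <= x) /\ (forall b, (forall x, E x -> b <= x) -> b <= l).

(* Main.v *)
Require Import Defs.
From Stdlib Require Import Reals Lra Lia Classical FunctionalExtensionality PropExtensionality.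
Open Scope R_scope.

Lemma pred_ext {T} (A B : T -> Prop) : (forall x, A x <-> B x) -> A = B.
Proof. intros H; apply functional_extensionality; intros x; apply propositional_extensionality; auto. Qed.

Lemma open_borel {T} (d:T->T->R) O : Defs.open_set d O -> borel d O.
Proof. intros HO S HS Hop. apply Hop, HO. Qed.

Lemma borel_compl {T} (d:T->T->R) A : borel d A -> borel d (fun x => ~ A x).
Proof. intros HA S HS Hop. pose proof HS as [H1 [H2 H3]]. apply H2. apply HA; auto. Qed.

Lemma borel_union {T} (d:T->T->R) (A : nat -> T -> Prop) :
  (forall i, borel d (A i)) -> borel d (fun x => exists i, A i x).
Proof. intros HA S HS Hop. pose proof HS as [H1 [H2 H3]]. apply H3. intros i; apply HA; auto. Qed.

Lemma borel_empty {T} (d:T->T->R) : borel d (fun _ => False).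
Proof. apply open_borel. intros x []. Qed.

Lemma borel_inter {T} (d:T->T->R) A B : borel d A -> borel d B -> borel d (fun x => A x /\ B x).
Proof.
  intros HA HB.
  pose (C := fun i:nat => match i with 0 => fun x => ~ A x | _ => fun x => ~ B x end).
  assert (E : (fun x => A x /\ B x) = (fun x => ~ exists i, C i x)).
  { apply pred_ext; intros x; split.
    - intros [Ha Hb] [i Hi]. destruct i; simpl in Hi; auto.
    - intros H. split; apply NNPP; intros Hn; apply H; [exists 0%nat | exists 1%nat]; exact Hn. }
  rewrite E. apply borel_compl, borel_union. intros [|i]; simpl; apply borel_compl; auto.
Qed.

Section Meas.
Context {T : Type} (d : T -> T -> R) (m : (T -> Prop) -> R) (Hm : prob_measure d m).

Lemma m_empty : m (fun _ => False) = 0.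
Proof.
  destruct Hm as [H1 [H2 H3]].
  pose proof (H3 (fun _ _ => False) (fun _ => borel_empty d) (fun i j x _ h _ => h)) as Sm.
  assert (E : (fun x : T => exists i : nat, (fun (_:nat) (_:T) => False) i x) = (fun _ => False)).
  { apply pred_ext; intros x; split; [intros [_ []] | intros []]. }
  cbv beta in Sm. rewrite E in Sm. set (c := m (fun _ => False)) in *.
  destruct (Req_dec c 0) as [|Hc]; auto.
  assert (Hp : Rabs c / 2 > 0) by (pose proof (Rabs_pos_lt c Hc); lra).
  destruct (Sm _ Hp) as [N HN].
  pose proof (HN N (le_n _)) as A1. pose proof (HN (S N) (le_S _ _ (le_n _))) as A2.
  rewrite sum_cte in A1, A2. unfold Rdist in A1, A2.
  rewrite S_INR in A2. rewrite S_INR in A1.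
  replace (c * (INR (S N) + 1) - c) with (c * INR (S N)) in A2 by ring.
  replace (c * (INR N + 1) - c) with (c * INR N) in A1 by ring.
  rewrite S_INR in A2.
  rewrite Rabs_mult in A1, A2.
  pose proof (pos_INR N). rewrite (Rabs_right (INR N)) in A1 by lra.
  rewrite (Rabs_right (INR N + 1)) in A2 by lra. nra.
Qed.

Lemma m_add2 A B : borel d A -> borel d B -> (forall x, A x -> B x -> False) ->
  m (fun x => A x \/ B x) = m A + m B.
Proof.
  intros HA HB Hd. pose proof Hm as [H1 [H2 H3]].
  pose (C := fun i:nat => match i with 0 => A | 1 => B | _ => fun _ => False end).
  assert (HC : forall i, borel d (C i)).
  { intros [|[|i]]; simpl; auto. apply borel_empty. }
  assert (HD : forall i j x, i <> j -> C i x -> C j x -> False).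
  { intros [|[|i]] [|[|j]] x Hij; simpl; try tauto; try (intros; eapply Hd; eauto; fail). }
  pose proof (H3 C HC HD) as Sm.
  assert (E : (fun x => exists i, C i x) = (fun x => A x \/ B x)).
  { apply pred_ext; intros x; split.
    - intros [[|[|i]] Hi]; simpl in Hi; tauto.
    - intros [H|H]; [exists 0%nat|exists 1%nat]; exact H. }
  rewrite E in Sm. apply (uniqueness_sum (fun i => m (C i))); [exact Sm|].
  assert (Hs : forall n, sum_f_R0 (fun i => m (C i)) (S n) = m A + m B).
  { induction n. simpl. ring. simpl sum_f_R0 in *. rewrite IHn. simpl. rewrite m_empty. ring. }
  intros e He. exists 1%nat. intros n Hn. destruct n. lia. rewrite Hs. unfold Rdist.
  replace (m A + m B - (m A + m B)) with 0 by ring. rewrite Rabs_R0. lra.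
Qed.

Lemma m_nonneg A : borel d A -> 0 <= m A.
Proof. destruct Hm as [H1 _]; auto. Qed.

Lemma borel_true : borel d (fun _ => True).
Proof. intros S [H _] _; exact H. Qed.

Lemma m_compl A : borel d A -> m (fun x => ~ A x) = 1 - m A.
Proof.
  intros HA. pose proof Hm as [_ [H2 _]].
  assert (E : (fun _ : T => True) = (fun x => A x \/ ~ A x)).
  { apply pred_ext; intros x; split; auto. intros _; apply classic. }
  rewrite E, m_add2 in H2; auto. lra. apply borel_compl; auto.
Qed.

Lemma m_inter A B : borel d A -> borel d B -> m A + m B - 1 <= m (fun x => A x /\ B x).
Proof.
  intros HA HB.
  assert (E : A = (fun x => (A x /\ B x) \/ (A x /\ ~ B x))).
  { apply pred_ext; intros x; split; [|tauto]. intros a; destruct (classic (B x)); tauto. }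
  assert (Ha : m A = m (fun x => A x /\ B x) + m (fun x => A x /\ ~ B x)).
  { rewrite E at 1. apply m_add2; try apply borel_inter; auto using borel_compl. tauto. }
  assert (Hb : m (fun x => A x /\ ~ B x) <= m (fun x => ~ B x)).
  { assert (E2 : (fun x => ~ B x) = (fun x => (A x /\ ~ B x) \/ (~ A x /\ ~ B x))).
    { apply pred_ext; intros x; split; [|tauto]. intros a; destruct (classic (A x)); tauto. }
    rewrite E2. rewrite m_add2; try apply borel_inter; auto using borel_compl; [|tauto].
    pose proof (m_nonneg (fun x => ~ A x /\ ~ B x)). 
    assert (0 <= m (fun x => ~ A x /\ ~ B x)); [apply H; apply borel_inter; apply borel_compl; auto|lra]. }
  rewrite m_compl in Hb; auto. lra.
Qed.

End Meas.

Lemma open_ball {T} (d:T->T->R) x0 r : is_metric d -> Defs.open_set d (fun x => d x0 x < r).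
Proof.
  intros [Hp [Hz [Hs Ht]]] x Hx. exists (r - d x0 x). split. lra.
  intros y Hy. pose proof (Ht x0 x y). lra.
Qed.

Lemma open_nbhd {T} (d:T->T->R) e A : is_metric d -> Defs.open_set d (nbhd d e A).
Proof.
  intros [Hp [Hz [Hs Ht]]] x [a [Ha Hxa]]. exists (e - d x a). split. lra.
  intros y Hy. exists a. split; auto. pose proof (Ht y x a). rewrite (Hs y x) in H. lra.
Qed.

Lemma exists_nat_gt (r : R) : exists k : nat, r < INR k.
Proof.
  destruct (INR_archimed 1 r) as [n Hn]; [lra|]. exists n. lra.
Qed.

Lemma tight {T} (d:T->T->R) m : is_metric d -> prob_measure d m ->
  forall x0 tau, 0 < tau -> exists r, 1 - tau <= m (fun x => d x0 x < r).
Proof.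
  intros Hd Hm x0 tau Ht.
  pose proof Hd as [Hp [Hz [Hs Htr]]].
  pose (An := fun k x => d x0 x < INR (S k) /\ ~ d x0 x < INR k).
  assert (HB : forall k, borel d (An k)).
  { intros k. apply borel_inter; [|apply borel_compl]; apply open_borel, open_ball; auto. }
  assert (HD : forall i j x, i <> j -> An i x -> An j x -> False).
  { intros i j x Hij [H1 H2] [H3 H4].
    destruct (Nat.lt_total i j) as [Hl|[Hl|Hl]]; [|tauto|].
    - apply H4. eapply Rlt_le_trans; [exact H1|]. apply le_INR; lia.
    - apply H2. eapply Rlt_le_trans; [exact H3|]. apply le_INR; lia. }
  pose proof Hm as [H1 [H2 H3]].
  pose proof (H3 An HB HD) as Sm.
  assert (E : (fun x => exists i, An i x) = (fun _ => True)).
  { apply pred_ext; intros x; split; auto. intros _.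
    destruct (exists_nat_gt (d x0 x)) as [k Hk].
    clear -Hk Hp. induction k.
    - simpl in Hk. pose proof (Hp x0 x). lra.
    - destruct (classic (d x0 x < INR k)) as [h|h]; auto. exists k. split; auto. }
  rewrite E, H2 in Sm.
  assert (Hsum : forall k, sum_f_R0 (fun i => m (An i)) k = m (fun x => d x0 x < INR (S k))).
  { induction k.
    - simpl sum_f_R0. f_equal. apply pred_ext; intros x. unfold An. simpl. pose proof (Hp x0 x). split; [tauto|]. intros; split; auto; lra.
    - simpl sum_f_R0. rewrite IHk. rewrite <- (m_add2 d m Hm).
      + f_equal. apply pred_ext; intros x. unfold An. split.
        * intros [h|[h h']]; auto. eapply Rlt_trans; [exact h|]. apply lt_INR; lia.
        * intros h. destruct (classic (d x0 x < INR (S k))); tauto.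
      + apply open_borel, open_ball; auto.
      + auto.
      + intros x h [_ h']; auto. }
  destruct (Sm tau Ht) as [N HN]. specialize (HN N (le_n _)). rewrite Hsum in HN.
  exists (INR (S N)). unfold Rdist in HN. apply Rabs_def2 in HN. lra.
Qed.

Definition dR (x y : R) := Rabs (x - y).
Lemma dR_metric : is_metric dR.
Proof.
  unfold dR; split; [|split; [|split]].
  - intros; apply Rabs_pos.
  - intros x y; split; intros H. destruct (Req_dec x y); auto. exfalso. apply Rabs_no_R0 in H; auto. lra.
    subst. replace (y - y) with 0 by ring. apply Rabs_R0.
  - intros; apply Rabs_minus_sym.
  - intros x y z. replace (x - z) with ((x - y) + (y - z)) by ring. apply Rabs_triang.
Qed.

Definition dtr (c x y : R) := Rmin (Rabs (x - y)) c.
Lemma dtr_metric c : 0 < c -> is_metric (dtr c).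
Proof.
  intros Hc; unfold dtr, Rmin; split; [|split; [|split]].
  - intros x y; destruct (Rle_dec _ _); [apply Rabs_pos|lra].
  - intros x y; split; intros H.
    + destruct (Rle_dec _ _); [|lra]. destruct (Req_dec x y); auto. exfalso. apply Rabs_no_R0 in H; auto. lra.
    + subst. replace (y - y) with 0 by ring. rewrite Rabs_R0. destruct (Rle_dec _ _); lra.
  - intros; rewrite Rabs_minus_sym; auto.
  - intros x y z. pose proof (Rabs_triang (x - y) (y - z)). replace (x - y + (y - z)) with (x - z) in H by ring.
    pose proof (Rabs_pos (x - y)). pose proof (Rabs_pos (y - z)).
    repeat destruct (Rle_dec _ _); lra.
Qed.

Section F2.
Context (G : R -> R -> R) (HG : in_F2 G).

Lemma G_met_RR : is_metric (dF G dR dR).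
Proof. destruct HG as [_ [_ H]]. apply H; apply dR_metric. Qed.

Lemma G_zero : G 0 0 = 0.
Proof.
  destruct G_met_RR as [_ [Hz _]]. pose proof (proj2 (Hz (0,0) (0,0)) eq_refl) as H.
  unfold dF, dR in H; simpl in H. replace (0-0) with 0 in H by ring. rewrite Rabs_R0 in H; auto.
Qed.

Lemma G_subadd s1 s2 t1 t2 : 0 <= s1 -> 0 <= s2 -> 0 <= t1 -> 0 <= t2 ->
  G (s1 + s2) (t1 + t2) <= G s1 t1 + G s2 t2.
Proof.
  intros. destruct G_met_RR as [_ [_ [_ Ht]]].
  pose proof (Ht (0,0) (s1,t1) (s1+s2,t1+t2)) as H3. unfold dF, dR in H3; simpl in H3.
  replace (0 - (s1+s2)) with (-(s1+s2)) in H3 by ring. replace (0 - (t1+t2)) with (-(t1+t2)) in H3 by ring.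
  replace (0 - s1) with (- s1) in H3 by ring. replace (0 - t1) with (- t1) in H3 by ring.
  replace (s1 - (s1+s2)) with (- s2) in H3 by ring. replace (t1 - (t1+t2)) with (- t2) in H3 by ring.
  rewrite !Rabs_Ropp, !Rabs_right in H3 by lra. auto.
Qed.

Lemma G_pos1 r : 0 < r -> 0 < G r 0.
Proof.
  intros Hr. destruct G_met_RR as [Hp [Hz _]].
  pose proof (Hp (r,0) (0,0)) as H1. unfold dF, dR in H1; simpl in H1.
  replace (r - 0) with r in H1 by ring. replace (0-0) with 0 in H1 by ring. rewrite Rabs_R0, Rabs_right in H1 by lra.
  destruct H1 as [|H1]; auto. exfalso. symmetry in H1.
  assert (dF G dR dR (r,0) (0,0) = 0) as H2.
  { unfold dF, dR; simpl. replace (r - 0) with r by ring. replace (0-0) with 0 by ring. rewrite Rabs_R0, Rabs_right by lra. auto. }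
  apply Hz in H2. inversion H2. lra.
Qed.

Lemma G_pos2 r : 0 < r -> 0 < G 0 r.
Proof.
  intros Hr. destruct G_met_RR as [Hp [Hz _]].
  pose proof (Hp (0,r) (0,0)) as H1. unfold dF, dR in H1; simpl in H1.
  replace (r - 0) with r in H1 by ring. replace (0-0) with 0 in H1 by ring. rewrite Rabs_R0, Rabs_right in H1 by lra.
  destruct H1 as [|H1]; auto. exfalso. symmetry in H1.
  assert (dF G dR dR (0,r) (0,0) = 0) as H2.
  { unfold dF, dR; simpl. replace (r - 0) with r by ring. replace (0-0) with 0 by ring. rewrite Rabs_R0, Rabs_right by lra. auto. }
  apply Hz in H2. inversion H2. lra.
Qed.

Lemma G_low1 r s t : 0 < r -> r <= s -> 0 <= t -> G r 0 <= 2 * G s t.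
Proof.
  intros. destruct HG as [_ [_ HH]]. destruct (HH _ _ (dtr s) dR (dtr_metric s ltac:(lra)) dR_metric) as [_ [_ [Hs Ht]]].
  pose proof (Ht (0,0) (2*s+r,t) (r,0)) as H3. unfold dF, dR, dtr, Rmin in H3; simpl in H3.
  replace (0 - r) with (-r) in H3 by ring. replace (0 - (2*s+r)) with (-(2*s+r)) in H3 by ring.
  replace (2*s+r-r) with (2*s) in H3 by ring. replace (0-0) with 0 in H3 by ring.
  replace (0-t) with (-t) in H3 by ring. replace (t-0) with t in H3 by ring.
  rewrite !Rabs_Ropp, Rabs_R0, !(Rabs_right t), (Rabs_right r), (Rabs_right (2*s+r)), (Rabs_right (2*s)) in H3 by lra.
  repeat destruct (Rle_dec _ _); try lra.
Qed.

Lemma G_low2 r s t : 0 < r -> r <= s -> 0 <= t -> G 0 r <= 2 * G t s.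
Proof.
  intros. destruct HG as [_ [_ HH]]. destruct (HH _ _ dR (dtr s) dR_metric (dtr_metric s ltac:(lra))) as [_ [_ [Hs Ht]]].
  pose proof (Ht (0,0) (t,2*s+r) (0,r)) as H3. unfold dF, dR, dtr, Rmin in H3; simpl in H3.
  replace (0 - r) with (-r) in H3 by ring. replace (0 - (2*s+r)) with (-(2*s+r)) in H3 by ring.
  replace (2*s+r-r) with (2*s) in H3 by ring. replace (0-0) with 0 in H3 by ring.
  replace (0-t) with (-t) in H3 by ring. replace (t-0) with t in H3 by ring.
  rewrite !Rabs_Ropp, Rabs_R0, !(Rabs_right t), (Rabs_right r), (Rabs_right (2*s+r)), (Rabs_right (2*s)) in H3 by lra.
  repeat destruct (Rle_dec _ _); try lra.
Qed.

Lemma borel_fst {T U} (dT : T -> T -> R) (dU : U -> U -> R) A :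
  is_metric dT -> is_metric dU -> borel dT A -> borel (dF G dT dU) (fun z => A (fst z)).
Proof.
  intros HT HU HA. apply (HA (fun C => borel (dF G dT dU) (fun z => C (fst z)))).
  - split; [|split].
    + intros S HS _; apply HS.
    + intros C HC. apply borel_compl; auto.
    + intros C HC. apply borel_union with (A := fun i z => C i (fst z)); auto.
  - intros O HO. apply open_borel. intros [x y] Hx. simpl in Hx.
    destruct (HO x Hx) as [r [Hr Hb]]. exists (G r 0 / 2). pose proof (G_pos1 r Hr). split. lra.
    intros [x' y'] H'. unfold dF in H'; simpl in *. apply Hb.
    destruct (Rlt_or_le (dT x x') r) as [|Hle]; auto. exfalso.
    pose proof HU as [HUp _]. pose proof (G_low1 r (dT x x') (dU y y') Hr Hle (HUp y y')). lra.
Qed.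

Lemma borel_snd {T U} (dT : T -> T -> R) (dU : U -> U -> R) A :
  is_metric dT -> is_metric dU -> borel dU A -> borel (dF G dT dU) (fun z => A (snd z)).
Proof.
  intros HT HU HA. apply (HA (fun C => borel (dF G dT dU) (fun z => C (snd z)))).
  - split; [|split].
    + intros S HS _; apply HS.
    + intros C HC. apply borel_compl; auto.
    + intros C HC. apply borel_union with (A := fun i z => C i (snd z)); auto.
  - intros O HO. apply open_borel. intros [x y] Hx. simpl in Hx.
    destruct (HO y Hx) as [r [Hr Hb]]. exists (G 0 r / 2). pose proof (G_pos2 r Hr). split. lra.
    intros [x' y'] H'. unfold dF in H'; simpl in *. apply Hb.
    destruct (Rlt_or_le (dU y y') r) as [|Hle]; auto. exfalso.
    pose proof HT as [HTp _]. pose proof (G_low2 r (dU y y') (dT x x') Hr Hle (HTp x x')). lra.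
Qed.

End F2.

Lemma eta_extract (P : nat -> R -> Prop) :
 (forall n a b, P n a -> a <= b -> P n b) ->
 (forall n, exists a, P n a) ->
 (forall g, 0 < g -> exists N, forall n, (N <= n)%nat -> P n g) ->
 exists eta, Un_cv eta 0 /\ forall n, P n (eta n).
Proof.
  intros Hmono Hex Hev.
  pose (E := fun n v => v <= 0 /\ P n (-v)).
  assert (bnd : forall n, bound (E n)). { intros n. exists 0. intros v [h _]; auto. }
  assert (ne : forall n, exists v, E n v).
  { intros n. destruct (Hex n) as [a Ha]. exists (- Rmax a 0). split.
    pose proof (Rmax_r a 0); lra. rewrite Ropp_involutive. eapply Hmono; [exact Ha|apply Rmax_l]. }
  pose (l := fun n => proj1_sig (completeness (E n) (bnd n) (ne n))).
  assert (Hl : forall n, is_lub (E n) (l n)). { intros n. unfold l. destruct completeness; auto. }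
  assert (Hl0 : forall n, l n <= 0). { intros n. apply (proj2 (Hl n)). intros v [h _]; auto. }
  exists (fun n => - l n + / INR (S n)). split.
  - intros e He. destruct (Hev (e/2) ltac:(lra)) as [N1 HN1].
    destruct (archimed_cor1 (e/2) ltac:(lra)) as [N2 [HN2 HN2']].
    exists (max N1 N2). intros n Hn. unfold Rdist, R_dist.
    assert (Hin : E n (-(e/2))). { split. lra. rewrite Ropp_involutive. apply HN1. lia. }
    pose proof (proj1 (Hl n) _ Hin). pose proof (Hl0 n).
    assert (/ INR (S n) <= / INR N2).
    { apply Rinv_le_contravar. apply lt_0_INR; lia. apply le_INR; lia. }
    assert (0 < / INR (S n)). { apply Rinv_0_lt_compat, lt_0_INR; lia. }
    rewrite Rminus_0_r, Rabs_right; lra.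
  - intros n. apply NNPP; intros Hn.
    assert (0 < / INR (S n)). { apply Rinv_0_lt_compat, lt_0_INR; lia. }
    assert (l n <= l n - / INR (S n)); [|lra].
    apply (proj2 (Hl n)). intros v [hv Pv]. destruct (Rle_dec v (l n - / INR (S n))) as [|h]; auto.
    exfalso. apply Hn. eapply Hmono; [exact Pv|]. lra.
Qed.

Lemma fin_ev (Q : nat -> nat -> Prop) M :
  (forall k, (k <= M)%nat -> exists N, forall n, (N <= n)%nat -> Q k n) ->
  exists N, forall k, (k <= M)%nat -> forall n, (N <= n)%nat -> Q k n.
Proof.
  induction M; intros H.
  - destruct (H 0%nat (le_n _)) as [N HN]. exists N. intros k Hk. replace k with 0%nat by lia. auto.
  - destruct IHM as [N1 HN1]. intros k Hk; apply H; lia.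
    destruct (H (S M) (le_n _)) as [N2 HN2]. exists (max N1 N2). intros k Hk n Hn.
    destruct (Nat.eq_dec k (S M)). subst; apply HN2; lia. apply HN1; lia.
Qed.

Lemma grid (h s : R) M : 0 < h -> 0 <= s ->
  exists k, (k <= M)%nat /\ INR k * h <= s /\ (s < INR k * h + h \/ k = M).
Proof.
  intros Hh Hs. induction M.
  - exists 0%nat. simpl. split; auto. split. lra. auto.
  - destruct IHM as [k [Hk [H1 H2]]].
    destruct (Rlt_or_le s (INR k * h + h)) as [Hl|Hl].
    + exists k. split. lia. auto.
    + destruct H2 as [H2|H2]. lra. subst. exists (S M). split; auto. split; auto.
      rewrite S_INR; lra.
Qed.

Lemma mm_inhabited (M : mmspace) : inhabited M.
Proof.
  apply NNPP; intros H. pose proof (mm_prob M) as Hm. pose proof Hm as [_ [H2 _]].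
  assert (E : (fun _ : M => True) = (fun _ => False)).
  { apply pred_ext; intros x; split; [intros _; apply H; constructor; auto|intros []]. }
  rewrite E, (m_empty _ _ Hm) in H2. lra.
Qed.

Lemma side (Xn X : mmspace) (p : Xn -> X) (ep tau r : R) (x0 : X) :
  0 < tau -> Rabs ep <= 1 ->
  borel_map (mm_dist Xn) (mm_dist X) p ->
  lip1_up_to (mm_dist Xn) (mm_meas Xn) (mm_dist X) p ep ->
  prokhorov_le (mm_dist X) (pushforward p (mm_meas Xn)) (mm_meas X) ep ->
  1 - tau <= mm_meas X (fun x => mm_dist X x0 x < r) ->
  exists X0, borel (mm_dist Xn) X0 /\ 1 - 2*Rabs ep - 2*tau <= mm_meas Xn X0 /\
    forall x x', X0 x -> X0 x' -> mm_dist X (p x) (p x') <= mm_dist Xn x x' + Rabs ep /\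
       mm_dist X (p x) (p x') < 2 * (r + 1 + tau).
Proof.
  intros Ht He Hb [X0 [HX0b [HX0m HX0d]]] Hpr Hball.
  pose proof (mm_metric X) as HMX. pose proof HMX as [Hp [_ [Hs Htr]]].
  pose proof (Rle_abs ep).
  destruct (Hpr (Rabs ep + tau) ltac:(lra)) as [e [He0 [He1 Hc]]].
  pose (B := fun x => mm_dist X x0 x < r).
  assert (HBb : borel (mm_dist X) B) by (apply open_borel, open_ball; auto).
  specialize (Hc B HBb). unfold pushforward in Hc.
  assert (Hpre : borel (mm_dist Xn) (fun x => nbhd (mm_dist X) e B (p x))).
  { apply Hb. apply open_borel, open_nbhd; auto. }
  exists (fun x => X0 x /\ nbhd (mm_dist X) e B (p x)). split; [|split].
  - apply borel_inter; auto.
  - pose proof (m_inter _ _ (mm_prob Xn) _ _ HX0b Hpre). fold B in Hball. lra.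
  - intros x x' [h1 [a [Ha Hxa]]] [h1' [a' [Ha' Hxa']]]. split.
    + pose proof (HX0d x x' h1 h1'). lra.
    + unfold B in Ha, Ha'.
      pose proof (Htr (p x) a (p x')). pose proof (Htr a x0 (p x')). pose proof (Htr x0 a' (p x')).
      rewrite (Hs a x0) in *. rewrite (Hs a' (p x')) in *. lra.
Qed.

Lemma prod_bound u v a b : 0 <= u -> 0 <= v -> 1 - a <= u -> 1 - b <= v -> 0 <= a -> 0 <= b ->
  1 - a - b <= u * v.
Proof. intros. destruct (Rle_dec a 1); destruct (Rle_dec b 1); nra. Qed.

Theorem mainTheorem18
  (Xs Ys : nat -> mmspace) (X Y : mmspace)
  (Fs : nat -> R -> R -> R) (F : R -> R -> R)
  (HFs : forall n, in_F2 (Fs n)) (HF : in_F2 F)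
  (Hconv : forall s t, 0 <= s -> 0 <= t -> Un_cv (fun n => Fs n s t) (F s t))
  (Hinf : forall s t, 0 <= s -> 0 <= t ->
     exists i : nat -> R,
       (forall n, is_glb (fun v => exists s' t', s <= s' /\ t <= t' /\ v = Fs n s' t') (i n))
       /\ Un_cv (fun n => Fs n s t - i n) 0)
  (p : forall n, Xs n -> X) (q : forall n, Ys n -> Y)
  (eps delta : nat -> R)
  (Hpb : forall n, borel_map (mm_dist (Xs n)) (mm_dist X) (p n))
  (Hqb : forall n, borel_map (mm_dist (Ys n)) (mm_dist Y) (q n))
  (Hpl : forall n, lip1_up_to (mm_dist (Xs n)) (mm_meas (Xs n)) (mm_dist X) (p n) (eps n))
  (Hql : forall n, lip1_up_to (mm_dist (Ys n)) (mm_meas (Ys n)) (mm_dist Y) (q n) (delta n))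
  (Hpp : forall n, prokhorov_le (mm_dist X) (pushforward (p n) (mm_meas (Xs n))) (mm_meas X) (eps n))
  (Hqp : forall n, prokhorov_le (mm_dist Y) (pushforward (q n) (mm_meas (Ys n))) (mm_meas Y) (delta n))
  (Heps : Un_cv eps 0) (Hdelta : Un_cv delta 0)
  (mu : forall n, (Xs n * Ys n -> Prop) -> R)
  (Hmu : forall n, is_product_measure (Fs n) (Xs n) (Ys n) (mu n)) :
  exists eta : nat -> R, Un_cv eta 0 /\
    forall n, lip1_up_to (dF (Fs n) (mm_dist (Xs n)) (mm_dist (Ys n))) (mu n)
                (dF F (mm_dist X) (mm_dist Y))
                (fun z : Xs n * Ys n => (p n (fst z), q n (snd z))) (eta n).
Proof.
  apply (eta_extract (fun n g => lip1_up_to (dF (Fs n) (mm_dist (Xs n)) (mm_dist (Ys n))) (mu n)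
                (dF F (mm_dist X) (mm_dist Y))
                (fun z : Xs n * Ys n => (p n (fst z), q n (snd z))) g)).
  - intros n a b [Z0 [HZb [HZm HZd]]] Hab. exists Z0. split; auto. split. lra.
    intros z z' h h'. pose proof (HZd z z' h h'). lra.
  - intros n. exists (Rabs (1 - mu n (fun _ => False))). exists (fun _ => False).
    split. apply borel_empty. split. pose proof (Rle_abs (1 - mu n (fun _ => False))). lra.
    intros _ _ [].
  - intros g Hg.
    assert (Fmono : forall s t s' t', 0 <= s -> s <= s' -> 0 <= t -> t <= t' -> F s t <= F s' t').
    { intros s t s' t' H1 H2 H3 H4. destruct (Hinf s t H1 H3) as [i [Hgl Hcv]].
      apply (@Rle_cv_lim i (fun n => Fs n s' t')).
      - intros n. apply (proj1 (Hgl n)). exists s', t'. auto.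
      - pose proof (CV_minus _ _ _ _ (Hconv s t H1 H3) Hcv) as Hc. rewrite Rminus_0_r in Hc.
        intros e He. destruct (Hc e He) as [N HN]. exists N. intros n Hn. specialize (HN n Hn).
        replace (Fs n s t - (Fs n s t - i n)) with (i n) in HN by ring. exact HN.
      - apply Hconv; lra. }
    pose proof (G_zero F HF) as F00.
    destruct HF as [Fcont [Fpos Fmet]].
    destruct (Fcont 0 0 (Rle_refl _) (Rle_refl _) (g/2) ltac:(lra)) as [rho [Hrho Hc0]].
    pose (tau := g/8).
    destruct (mm_inhabited X) as [x0]. destruct (mm_inhabited Y) as [y0].
    destruct (tight _ _ (mm_metric X) (mm_prob X) x0 tau ltac:(unfold tau; lra)) as [RX HRX].
    destruct (tight _ _ (mm_metric Y) (mm_prob Y) y0 tau ltac:(unfold tau; lra)) as [RY HRY].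
    pose (K := 2 * (Rabs RX + Rabs RY + tau + 1)).
    pose (h := rho / 2).
    destruct (INR_archimed h K ltac:(unfold h; lra)) as [M HM].
    destruct (fin_ev (fun k n => forall l, (l <= M)%nat -> forall s t,
        INR k * h <= s -> INR l * h <= t -> F (INR k * h) (INR l * h) - g/2 <= Fs n s t) M) as [NG HNG].
    { intros k Hk.
      destruct (fin_ev (fun l n => forall s t,
        INR k * h <= s -> INR l * h <= t -> F (INR k * h) (INR l * h) - g/2 <= Fs n s t) M) as [N0 HN0];
      [|exists N0; intros n Hn l Hl; apply HN0; auto].
      intros l Hl.
      assert (Hkh : 0 <= INR k * h) by (pose proof (pos_INR k); unfold h; nra).
      assert (Hlh : 0 <= INR l * h) by (pose proof (pos_INR l); unfold h; nra).
      destruct (Hinf _ _ Hkh Hlh) as [i [Hgl Hcv]].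
      destruct (Hcv (g/4) ltac:(lra)) as [N1 HN1].
      destruct (Hconv _ _ Hkh Hlh (g/4) ltac:(lra)) as [N2 HN2].
      exists (max N1 N2). intros n Hn s t Hs Ht.
      specialize (HN1 n ltac:(lia)). specialize (HN2 n ltac:(lia)).
      unfold R_dist in HN1, HN2. rewrite Rminus_0_r in HN1.
      apply Rabs_def2 in HN1. apply Rabs_def2 in HN2.
      assert (i n <= Fs n s t). { apply (proj1 (Hgl n)). exists s, t. auto. }
      lra. }
    pose (emin := Rmin (g/8) (Rmin 1 (rho/2))).
    assert (Hemin : 0 < emin).
    { unfold emin. apply Rmin_pos. lra. apply Rmin_pos; lra. }
    assert (He1 : emin <= g/8) by apply Rmin_l.
    assert (He2 : emin <= 1) by (eapply Rle_trans; [apply Rmin_r|apply Rmin_l]).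
    assert (He3 : emin <= rho/2) by (eapply Rle_trans; [apply Rmin_r|apply Rmin_r]).
    destruct (Heps emin Hemin) as [NE HNE].
    destruct (Hdelta emin Hemin) as [ND HND].
    exists (max NG (max NE ND)). intros n Hn.
    specialize (HNE n ltac:(lia)). specialize (HND n ltac:(lia)).
    unfold R_dist in HNE, HND. rewrite Rminus_0_r in HNE, HND.
    destruct (side (Xs n) X (p n) (eps n) tau RX x0 ltac:(unfold tau; lra) ltac:(lra)
       (Hpb n) (Hpl n) (Hpp n) HRX) as [X0 [HX0b [HX0m HX0d]]].
    destruct (side (Ys n) Y (q n) (delta n) tau RY y0 ltac:(unfold tau; lra) ltac:(lra)
       (Hqb n) (Hql n) (Hqp n) HRY) as [Y0 [HY0b [HY0m HY0d]]].
    pose proof (mm_metric (Xs n)) as HMXn. pose proof (mm_metric (Ys n)) as HMYn.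
    pose proof (mm_metric X) as HMX. pose proof (mm_metric Y) as HMY.
    exists (fun z => X0 (fst z) /\ Y0 (snd z)). split; [|split].
    + apply borel_inter. apply borel_fst; auto. apply borel_snd; auto.
    + destruct (Hmu n) as [Hpm Hrect]. rewrite Hrect; auto.
      pose proof (m_nonneg _ _ (mm_prob (Xs n)) _ HX0b).
      pose proof (m_nonneg _ _ (mm_prob (Ys n)) _ HY0b).
      pose proof (Rabs_pos (eps n)). pose proof (Rabs_pos (delta n)).
      pose proof (prod_bound (mm_meas (Xs n) X0) (mm_meas (Ys n) Y0) (2 * Rabs (eps n) + 2 * tau)
        (2 * Rabs (delta n) + 2 * tau)) as PB.
      unfold tau in *. 
      assert (1 - (2 * Rabs (eps n) + 2 * (g / 8)) - (2 * Rabs (delta n) + 2 * (g / 8))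
        <= mm_meas (Xs n) X0 * mm_meas (Ys n) Y0) by (apply PB; lra). lra.
    + intros [x y] [x' y'] [hx hy] [hx' hy']. simpl in *. unfold dF; simpl.
      destruct (HX0d x x' hx hx') as [Ha1 Ha2]. destruct (HY0d y y' hy hy') as [Hb1 Hb2].
      set (a := mm_dist X (p n x) (p n x')) in *. set (b := mm_dist Y (q n y) (q n y')) in *.
      set (s := mm_dist (Xs n) x x') in *. set (t := mm_dist (Ys n) y y') in *.
      assert (Ha0 : 0 <= a) by (apply (proj1 HMX)). assert (Hb0 : 0 <= b) by (apply (proj1 HMY)).
      assert (Hs0 : 0 <= s) by (apply (proj1 HMXn)). assert (Ht0 : 0 <= t) by (apply (proj1 HMYn)).
      pose proof (Rabs_pos (eps n)). pose proof (Rabs_pos (delta n)).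
      assert (HaK : a <= K) by (unfold K; pose proof (Rle_abs RX); pose proof (Rabs_pos RY); lra).
      assert (HbK : b <= K) by (unfold K; pose proof (Rle_abs RY); pose proof (Rabs_pos RX); lra).
      assert (Hh : 0 < h) by (unfold h; lra).
      destruct (grid h s M Hh Hs0) as [k [Hk [Hk1 Hk2]]].
      destruct (grid h t M Hh Ht0) as [l [Hl [Hl1 Hl2]]].
      assert (Hak : a <= INR k * h + (h + Rabs (eps n))).
      { destruct Hk2 as [Hk2|Hk2]. lra. subst k. lra. }
      assert (Hbl : b <= INR l * h + (h + Rabs (delta n))).
      { destruct Hl2 as [Hl2|Hl2]. lra. subst l. lra. }
      assert (Hkh : 0 <= INR k * h) by (pose proof (pos_INR k); nra).
      assert (Hlh : 0 <= INR l * h) by (pose proof (pos_INR l); nra).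
      pose proof (Fmono a b _ _ Ha0 Hak Hb0 Hbl) as S1.
      pose proof (G_subadd F (conj Fcont (conj Fpos Fmet)) (INR k * h) (h + Rabs (eps n))
          (INR l * h) (h + Rabs (delta n)) Hkh ltac:(lra) Hlh ltac:(lra)) as S2.
      pose proof (Hc0 (h + Rabs (eps n)) (h + Rabs (delta n)) ltac:(lra) ltac:(lra)) as S3.
      rewrite !Rminus_0_r in S3.
      specialize (S3 ltac:(rewrite Rabs_right; unfold h; lra) ltac:(rewrite Rabs_right; unfold h; lra)).
      rewrite F00, Rminus_0_r in S3. apply Rabs_def2 in S3.
      pose proof (HNG k Hk n ltac:(lia) l Hl s t Hk1 Hl1) as S4.
      lra.
Qed.
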